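(* Consider a qubit with two measurement settings $x,y\in\{0,1\}$, outcomes $\pm$, arbitrary instruments (the same instrument used for the same setting at both time steps), and let $p(ab|xy)$ be the probability of outcome $a$ for measurement $x$ at the first time step on the initial state followed by outcome $b$ for measurement $y$ at the second step; set $\mathcal{B}_1=p(++|00)+p(++|11)+p(+-|01)+p(+-|10)$. For $p,w_{+|0},w_{+|1}\in[0,1]$, let $B_1(p,w_{+|0},w_{+|1})$ be the maximum of $\mathcal{B}_1$ over all initial states with Bloch vector length $p$ and all instruments such that the post-measurement state after measurement $i$ with outcome $+$ has Bloch vector length $w_{+|i}$, $i=0,1$. Then, for fixed $p$ and fixed $w_{+|1-i}$, $B_1(p,w_{+|0},w_{+|1})$ is monotonically non-decreasing as a function of $w_{+|i}$ (equivalently of the purity $\frac12(1+w_{+|i}^2)$). In particular $B_1(p,w_{\max},w_{\max})\ge B_1(p,w_{+|0},w_{+|1})$ where $w_{\max}=\max_i w_{+|i}$.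
   Context: A qubit state is $\varrho=\frac12(\mathbb{1}+r\,\vec\alpha\cdot\vec\sigma)$ with $|\vec\alpha|=1$, $0\le r\le1$ the Bloch vector length, and purity $\frac12(1+r^2)$. An instrument is a collection of completely positive maps indexed by outcomes whose sum is trace preserving. *)

(* Defs.v *)
From HB Require Import structures.
From mathcomp Require Import all_boot all_order all_algebra.
From mathcomp Require Import complex.
From mathcomp Require Import classical_sets reals.
Set Implicit Arguments. Unset Strict Implicit. Unset Printing Implicit Defensive.
Import Order.TTheory GRing.Theory Num.Theory.
Local Open Scope ring_scope.

Section Qubit.
Variable R : realType.
Local Notation C := (R[i]).
Local Notation M2 := ('M[C]_2).

Definition pauliX : M2 := \matrix_(i < 2, j < 2) (if i == j then 0 else 1).
Definition pauliY : M2 := \matrix_(i < 2, j < 2)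
  (if i == j then 0 else if (i == 0 :> nat) then - 'i else 'i).
Definition pauliZ : M2 := \matrix_(i < 2, j < 2)
  (if i == j then (if (i == 0 :> nat) then 1 else -1) else 0).

Definition has_bloch_len (sigma : M2) (r : R) : Prop :=
  exists a1 a2 a3 : R, a1 ^+ 2 + a2 ^+ 2 + a3 ^+ 2 = 1 /\
    sigma = (2%:R)^-1 *: (1%:M + (r%:C)%C *:
      ((a1%:C)%C *: pauliX + (a2%:C)%C *: pauliY + (a3%:C)%C *: pauliZ)).

Definition adjmx m n (A : 'M[C]_(m, n)) : 'M[C]_(n, m) := (map_mx Num.conj A)^T.

Definition psd m (A : 'M[C]_m) : Prop :=
  forall v : 'cV[C]_m, 0 <= (adjmx v *m A *m v) 0 0.

Definition is_linear_map (f : M2 -> M2) : Prop :=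
  forall (a : C) (X Y : M2), f (a *: X + Y) = a *: f X + f Y.

(* complete positivity: id_n (x) f maps PSD block matrices to PSD ones, all n *)
Definition completely_positive (f : M2 -> M2) : Prop :=
  forall (n : nat) (B : 'I_n -> 'I_n -> M2),
    psd (\mxblock_(i < n, j < n) (B i j : 'M[C]_(2, 2))) ->
    psd (\mxblock_(i < n, j < n) (f (B i j) : 'M[C]_(2, 2))).

(* instrument with outcomes +/- (true = +, false = -) *)
Definition instrument (I : bool -> M2 -> M2) : Prop :=
  (forall a, is_linear_map (I a) /\ completely_positive (I a)) /\
  (forall X : M2, \tr (I true X + I false X) = \tr X).

Definition seqprob (rho : M2) (Ix Iy : bool -> M2 -> M2) (a b : bool) : R :=
  complex.Re (\tr (Iy b (Ix a rho))).

Definition calB1 (rho : M2) (I0 I1 : bool -> M2 -> M2) : R :=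
  seqprob rho I0 I0 true true + seqprob rho I1 I1 true true +
  seqprob rho I0 I1 true false + seqprob rho I1 I0 true false.

(* normalized post-measurement state after outcome + of instrument I on rho,
   required to exist (nonzero probability) and to have Bloch length w *)
Definition post_plus_len (rho : M2) (I : bool -> M2 -> M2) (w : R) : Prop :=
  0 < \tr (I true rho) /\ has_bloch_len ((\tr (I true rho))^-1 *: I true rho) w.

Definition admissible (p w0 w1 : R) (rho : M2) (I0 I1 : bool -> M2 -> M2) : Prop :=
  has_bloch_len rho p /\ instrument I0 /\ instrument I1 /\
  post_plus_len rho I0 w0 /\ post_plus_len rho I1 w1.

Definition B1 (p w0 w1 : R) : R :=
  sup [set v | exists (rho : M2) (I0 I1 : bool -> M2 -> M2),
                 admissible p w0 w1 rho I0 I1 /\ v = calB1 rho I0 I1].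

End Qubit.

(* Main.v *)
Require Import Defs.
From HB Require Import structures.
From mathcomp Require Import all_boot all_order all_algebra.
From mathcomp Require Import complex.
From mathcomp Require Import classical_sets reals.
From mathcomp Require Import ring lra.
Import Order.TTheory GRing.Theory Num.Theory.
Local Open Scope ring_scope.
Set Implicit Arguments. Unset Strict Implicit.

Section Work.
Variable R : realType.
Local Notation C := (R[i]).
Local Notation M2 := ('M[C]_2).

Lemma ceq (x y : C) : complex.Re x = complex.Re y -> complex.Im x = complex.Im y -> x = y.
Proof. by case: x => a b; case: y => c d /= -> ->. Qed.

Lemma ReD (x y : C) : complex.Re (x + y) = complex.Re x + complex.Re y.
Proof. by case: x => a b; case: y. Qed.
Lemma ImD (x y : C) : complex.Im (x + y) = complex.Im x + complex.Im y.
Proof. by case: x => a b; case: y. Qed.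
Lemma ReN (x : C) : complex.Re (- x) = - complex.Re x.
Proof. by case: x. Qed.
Lemma ImN (x : C) : complex.Im (- x) = - complex.Im x.
Proof. by case: x. Qed.
Lemma ReM (x y : C) : complex.Re (x * y) = complex.Re x * complex.Re y - complex.Im x * complex.Im y.
Proof. by case: x => a b; case: y. Qed.
Lemma ImM (x y : C) : complex.Im (x * y) = complex.Re x * complex.Im y + complex.Im x * complex.Re y.
Proof. by case: x => a b; case: y. Qed.
Lemma ReR (a : R) : complex.Re (a%:C)%C = a. Proof. by []. Qed.
Lemma ImR (a : R) : complex.Im (a%:C)%C = 0. Proof. by []. Qed.
Lemma Rei : complex.Re ('i : C) = 0. Proof. by rewrite -complexiE. Qed.
Lemma Imi : complex.Im ('i : C) = 1. Proof. by rewrite -complexiE. Qed.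
Lemma Re0 : complex.Re (0 : C) = 0. Proof. by []. Qed.
Lemma Im0 : complex.Im (0 : C) = 0. Proof. by []. Qed.
Lemma Re1 : complex.Re (1 : C) = 1. Proof. by []. Qed.
Lemma Im1 : complex.Im (1 : C) = 0. Proof. by []. Qed.
Lemma ReJ (x : C) : complex.Re (x^*) = complex.Re x. Proof. by case: x. Qed.
Lemma ImJ (x : C) : complex.Im (x^*) = - complex.Im x. Proof. by case: x. Qed.
Lemma ReMn (x : C) n : complex.Re (x *+ n) = complex.Re x *+ n.
Proof. by elim: n => [|n IH]; rewrite ?mulr0n // !mulrS ReD IH. Qed.
Lemma ImMn (x : C) n : complex.Im (x *+ n) = complex.Im x *+ n.
Proof. by elim: n => [|n IH]; rewrite ?mulr0n // !mulrS ImD IH. Qed.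

Definition cE := (ReJ, ImJ, ReD, ImD, ReN, ImN, ReM, ImM, ReR, ImR, Rei, Imi, Re0, Im0, Re1, Im1, ReMn, ImMn).

Definition cE2 := (ReD, ImD, ReM, ImM, ReJ, ImJ, ReN, ImN, Re0, Im0, Re1, Im1, Rei, Imi).

Ltac csimp := rewrite ?(ReD, ImD, ReM, ImM, ReJ, ImJ, ReN, ImN).

Lemma inv2C : (2%:R : C)^-1 = ((2%:R : R)^-1)%:C%C.
Proof. have := @rmorphV _ _ (@real_complex R) 2%:R; rewrite rmorph_nat => ->//. by rewrite unitfE pnatr_eq0. Qed.

Definition sgm_def (a1 a2 a3 : R) : M2 :=
  (a1%:C)%C *: pauliX R + (a2%:C)%C *: pauliY R + (a3%:C)%C *: pauliZ R.
Fact sgm_key : unit. Proof. exact: tt. Qed.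
Definition sgm := locked_with sgm_key sgm_def.
Lemma sgmU a1 a2 a3 : sgm a1 a2 a3 = (a1%:C)%C *: pauliX R + (a2%:C)%C *: pauliY R + (a3%:C)%C *: pauliZ R.
Proof. by rewrite /sgm unlock. Qed.

Definition bl (r a1 a2 a3 : R) : M2 :=
  (2%:R)^-1 *: (1%:M + (r%:C)%C *: sgm a1 a2 a3).

Lemma ord2P (P : 'I_2 -> Prop) : P 0 -> P 1 -> forall i, P i.
Proof. move=> h0 h1 [[|[|i]] Hi] //.
- by have -> : Ordinal Hi = 0 by apply: val_inj.
- by have -> : Ordinal Hi = 1 by apply: val_inj.
Qed.

Lemma sum2 (f : 'I_2 -> C) : \sum_i f i = f 0 + f 1.
Proof. by rewrite big_ord_recr big_ord1 /=; congr (f _ + f _); apply: val_inj. Qed.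

Lemma sgm00 a1 a2 a3 : sgm a1 a2 a3 0 0 = (a3%:C)%C.
Proof. by rewrite sgmU !mxE /=; ring. Qed.
Lemma sgm01 a1 a2 a3 : sgm a1 a2 a3 0 1 = (a1%:C)%C - 'i * (a2%:C)%C.
Proof. by rewrite sgmU !mxE /=; ring. Qed.
Lemma sgm10 a1 a2 a3 : sgm a1 a2 a3 1 0 = (a1%:C)%C + 'i * (a2%:C)%C.
Proof. by rewrite sgmU !mxE /=; ring. Qed.
Lemma sgm11 a1 a2 a3 : sgm a1 a2 a3 1 1 = - (a3%:C)%C.
Proof. by rewrite sgmU !mxE /=; ring. Qed.
Definition sgmE := (sgm00, sgm01, sgm10, sgm11).

Lemma tr_sgm a1 a2 a3 : \tr (sgm a1 a2 a3) = 0.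
Proof. by rewrite /mxtrace sum2 !sgmE addrN. Qed.

Lemma sgm_herm a1 a2 a3 : adjmx (sgm a1 a2 a3) = sgm a1 a2 a3.
Proof.
apply/matrixP; apply: ord2P; apply: ord2P; rewrite /adjmx !mxE !sgmE;
  apply: ceq; rewrite !cE; ring.
Qed.

Lemma sgm_sq a1 a2 a3 : a1 ^+ 2 + a2 ^+ 2 + a3 ^+ 2 = 1 ->
  sgm a1 a2 a3 *m sgm a1 a2 a3 = 1%:M.
Proof.
move=> h; apply/matrixP; apply: ord2P; apply: ord2P; rewrite !mxE sum2 !sgmE /=;
  apply: ceq; rewrite !cE; nra.
Qed.


Lemma adjmx_mxcol n (v_ : 'I_n -> 'cV[C]_2) :
  adjmx (\mxcol_i v_ i) = \mxrow_i adjmx (v_ i).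
Proof. by apply/matrixP => a b; rewrite !mxE. Qed.

Lemma quad_block n (B : 'I_n -> 'I_n -> M2) (v : 'cV[C]_(\sum_(i < n) 2)) :
  (adjmx v *m (\mxblock_(i < n, j < n) (B i j : 'M[C]_(2, 2))) *m v) 0 0 =
  \sum_i \sum_j (adjmx (submxcol v i) *m B i j *m submxcol v j) 0 0.
Proof.
rewrite -[v]submxcolK adjmx_mxcol mul_mxrow_mxblock mul_mxrow_mxcol summxE.
under eq_bigr do rewrite mulmx_suml summxE.
rewrite exchange_big /=; apply: eq_bigr => i _; apply: eq_bigr => j _.
by rewrite !mxcolK.
Qed.


Lemma adj_delta (k : 'I_2) : adjmx (delta_mx k 0 : 'cV[C]_2) = (delta_mx 0 k : 'rV[C]_2).
Proof.
apply/matrixP => a b; rewrite !mxE.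
by case: (a == 0) ; case: (b == k) => /=; rewrite ?conjc1 ?conjc0 ?(rmorph1, rmorph0).
Qed.

Lemma quad_delta (X : M2) (k : 'I_2) :
  (adjmx (delta_mx k 0 : 'cV[C]_2) *m X *m (delta_mx k 0 : 'cV[C]_2)) 0 0 = X k k.
Proof. by rewrite adj_delta -rowE -colE !mxE. Qed.

Lemma psd_tr (X : M2) : psd X -> 0 <= \tr X.
Proof.
move=> h; rewrite /mxtrace; apply: sumr_ge0 => k _.
by rewrite -quad_delta; apply: h.
Qed.

Lemma psd_one (X : M2) : psd X -> psd (\mxblock_(i < 1, j < 1) (X : 'M[C]_(2, 2)) : 'M[C]_(\sum_(i < 1) 2)).
Proof.
move=> h v; rewrite quad_block big_ord1 big_ord1; exact: h.
Qed.

Lemma one_psd (X : M2) : psd (\mxblock_(i < 1, j < 1) (X : 'M[C]_(2, 2)) : 'M[C]_(\sum_(i < 1) 2)) -> psd X.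
Proof.
move=> h u; have := h (\mxcol_(i < 1) u).
by rewrite quad_block big_ord1 big_ord1 mxcolK.
Qed.

Lemma cp_pos (f : M2 -> M2) : completely_positive f -> forall X, psd X -> psd (f X).
Proof.
move=> hf X hX; apply: one_psd.
exact: (hf 1 (fun _ _ => X) (psd_one hX)).
Qed.


Definition gram (t : M2) := exists (c : 'I_4 -> C) (u : 'I_4 -> 'cV[C]_2),
  (forall k, 0 <= c k) /\ t = \sum_k c k *: (u k *m adjmx (u k)).

Lemma adjmxZ m n (a : C) (x : 'M[C]_(m, n)) : adjmx (a *: x) = a^* *: adjmx x.
Proof. by apply/matrixP => i j; rewrite !mxE rmorphM. Qed.

Lemma adj_mul_conj (x y : 'cV[C]_2) : (adjmx x *m y) 0 0 = ((adjmx y *m x) 0 0)^*.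
Proof.
rewrite !mxE rmorph_sum; apply: eq_bigr => k _.
by rewrite !mxE rmorphM /= conjCK mulrC.
Qed.
Lemma quad_rank1 (x y u : 'cV[C]_2) :
  (adjmx x *m (u *m adjmx u) *m y) 0 0 =
  ((adjmx u *m x) 0 0)^* * (adjmx u *m y) 0 0.
Proof.
rewrite mulmxA -(mulmxA (adjmx x *m u)) [in LHS]mxE big_ord1.
by congr (_ * _); exact: adj_mul_conj.
Qed.

Lemma quad_sum (x y : 'cV[C]_2) (c : 'I_4 -> C) (u : 'I_4 -> 'cV[C]_2) :
  (adjmx x *m (\sum_k c k *: (u k *m adjmx (u k))) *m y) 0 0 =
  \sum_k c k * (((adjmx (u k) *m x) 0 0)^* * (adjmx (u k) *m y) 0 0).
Proof.
rewrite mulmx_sumr mulmx_suml summxE; apply: eq_bigr => k _.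
by rewrite -scalemxAr -scalemxAl mxE quad_rank1.
Qed.

Lemma gram_psd t : gram t -> psd t.
Proof.
move=> [c [u [hc ->]]] v; rewrite quad_sum; apply: sumr_ge0 => k _.
by apply: mulr_ge0 => //; rewrite mulrC; apply: mul_conjC_ge0.
Qed.


Lemma cp_prep (F : M2 -> M2) (t : M2) : completely_positive F -> gram t ->
  completely_positive (fun X => \tr (F X) *: t).
Proof.
move=> hF [c [u [hc ->]]] n B hB v.
have hB' := hF n B hB.
rewrite quad_block.
pose al k i := (adjmx (u k) *m submxcol v i) 0 0.
pose w k l := \mxcol_(i < n) (al k i *: (delta_mx l 0 : 'cV[C]_2)).
have hw : forall k l, 0 <= (adjmx (w k l) *m
    (\mxblock_(i < n, j < n) (F (B i j) : 'M[C]_(2, 2))) *m w k l) 0 0.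
  by move=> k l; apply: hB'.
have -> : \sum_i \sum_j (adjmx (submxcol v i) *m (\tr (F (B i j)) *:
     \sum_k c k *: (u k *m adjmx (u k))) *m submxcol v j) 0 0 =
  \sum_k c k * \sum_l (adjmx (w k l) *m
    (\mxblock_(i < n, j < n) (F (B i j) : 'M[C]_(2, 2))) *m w k l) 0 0.
  under [LHS]eq_bigr => i _ do under eq_bigr => j _ do
    rewrite -scalemxAr -scalemxAl mxE quad_sum.
  have hq : forall k, \sum_l (adjmx (w k l) *m
    (\mxblock_(i < n, j < n) (F (B i j) : 'M[C]_(2, 2))) *m w k l) 0 0 =
    \sum_(l < 2) \sum_i \sum_j ((al k i)^* * al k j * F (B i j) l l).
    move=> k; apply: eq_bigr => l _; rewrite quad_block.
    apply: eq_bigr => i _; apply: eq_bigr => j _.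
    rewrite !mxcolK adjmxZ -!scalemxAl -scalemxAr 2!mxE mulrA.
    by congr (_ * _); exact: quad_delta.
  under [RHS]eq_bigr => k _ do rewrite hq.
  rewrite /al /mxtrace.
  transitivity (\sum_i \sum_j \sum_k \sum_(l < 2) c k * (((adjmx (u k) *m submxcol v i) 0 0)^* *
     (adjmx (u k) *m submxcol v j) 0 0 * F (B i j) l l)).
    apply: eq_bigr => i _; apply: eq_bigr => j _; rewrite mulr_sumr.
    apply: eq_bigr => k _; rewrite mulr_suml; apply: eq_bigr => l _; ring.
  under [LHS]eq_bigr => i _ do rewrite exchange_big.
  rewrite [LHS]exchange_big; apply: eq_bigr => k _.
  under [LHS]eq_bigr => i _ do rewrite exchange_big.
  rewrite [LHS]exchange_big mulr_sumr; apply: eq_bigr => l _.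
  rewrite mulr_sumr; apply: eq_bigr => i _.
  by rewrite mulr_sumr.
by apply: sumr_ge0 => k _; apply: mulr_ge0 => //; apply: sumr_ge0.
Qed.


Definition ev (l : 'I_2) : 'cV[C]_2 := delta_mx l 0.

Lemma sum4 (f : 'I_4 -> C) : \sum_i f i =
  f (@Ordinal 4 0 isT) + f (@Ordinal 4 1 isT) + f (@Ordinal 4 2 isT) + f (@Ordinal 4 3 isT).
Proof.
rewrite !big_ord_recr big_ord0 /= add0r.
by congr (f _ + f _ + f _ + f _); apply: val_inj.
Qed.

Lemma ev_e l i : ev l i 0 = (i == l)%:R.
Proof. by rewrite /ev mxE andbT. Qed.
Lemma mulev (A : M2) l i : (A *m ev l) i 0 = A i l.
Proof. by rewrite /ev -colE mxE. Qed.
Lemma r1E (u : 'cV[C]_2) i j : (u *m adjmx u) i j = u i 0 * (u j 0)^*.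
Proof. by rewrite !mxE big_ord1 !mxE. Qed.
Lemma scE (c : C) (A : M2) i j : (c *: A) i j = c * A i j.
Proof. by rewrite mxE. Qed.
Lemma blE r a1 a2 a3 i j : bl r a1 a2 a3 i j = 2^-1 * ((i == j)%:R + (r%:C)%C * sgm a1 a2 a3 i j).
Proof. by rewrite !mxE. Qed.

Definition cf (r : R) (k : 'I_4) : C :=
  match val k with 0 | 1 => (((1 - r) / 2%:R)%:C)%C | _ => (r%:C)%C end.
Definition uf (P : M2) (k : 'I_4) : 'cV[C]_2 :=
  match val k with 0 => ev 0 | 1 => ev 1 | 2 => P *m ev 0 | _ => P *m ev 1 end.

Lemma cfE r : (cf r (@Ordinal 4 0 isT) = (((1 - r) / 2%:R)%:C)%C) *
  (cf r (@Ordinal 4 1 isT) = (((1 - r) / 2%:R)%:C)%C) *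
  (cf r (@Ordinal 4 2 isT) = (r%:C)%C) * (cf r (@Ordinal 4 3 isT) = (r%:C)%C).
Proof. by []. Qed.
Lemma ufE P : (uf P (@Ordinal 4 0 isT) = ev 0) * (uf P (@Ordinal 4 1 isT) = ev 1) *
  (uf P (@Ordinal 4 2 isT) = P *m ev 0) * (uf P (@Ordinal 4 3 isT) = P *m ev 1).
Proof. by []. Qed.

Lemma sum_r1 (c : 'I_4 -> C) (u : 'I_4 -> 'cV[C]_2) i j :
  (\sum_k c k *: (u k *m adjmx (u k))) i j = \sum_k c k * (u k i 0 * (u k j 0)^*).
Proof. by rewrite summxE; apply: eq_bigr => k _; rewrite scE r1E. Qed.

Lemma sum4M (f : 'I_4 -> M2) : \sum_i f i =
  f (@Ordinal 4 0 isT) + f (@Ordinal 4 1 isT) + f (@Ordinal 4 2 isT) + f (@Ordinal 4 3 isT).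
Proof.
rewrite !big_ord_recr big_ord0 /= add0r.
by congr (f _ + f _ + f _ + f _); apply: val_inj.
Qed.

Lemma adjmxM m n p (A : 'M[C]_(m, n)) (B : 'M[C]_(n, p)) :
  adjmx (A *m B) = adjmx B *m adjmx A.
Proof. by rewrite /adjmx map_mxM trmx_mul. Qed.

Lemma adjmxD m n (A B : 'M[C]_(m, n)) : adjmx (A + B) = adjmx A + adjmx B.
Proof. by apply/matrixP => i j; rewrite !mxE rmorphD. Qed.

Lemma adjmx1 : adjmx (1%:M : M2) = 1%:M.
Proof.
apply/matrixP => i j; rewrite !mxE eq_sym.
by case: (i == j); rewrite /= ?rmorph1 ?rmorph0.
Qed.

Lemma ev_sum : ev 0 *m adjmx (ev 0) + ev 1 *m adjmx (ev 1) = 1%:M.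
Proof.
apply/matrixP; apply: ord2P; apply: ord2P;
  by rewrite !mxE !big_ord1 !mxE /= ?rmorph1 ?rmorph0 ?mulr1 ?mulr0 ?addr0 ?add0r.
Qed.

Lemma conj_realC (x : R) : ((x%:C)%C)^* = (x%:C)%C.
Proof. by apply: ceq; rewrite ?ReJ ?ImJ /= ?oppr0. Qed.

Lemma inv2C' : (2%:R : C)^-1 = (((2%:R : R)^-1)%:C)%C.
Proof. exact: inv2C. Qed.

Lemma bl_herm r a1 a2 a3 : adjmx (bl r a1 a2 a3) = bl r a1 a2 a3.
Proof.
by rewrite /bl adjmxZ adjmxD adjmx1 adjmxZ sgm_herm conj_realC inv2C conj_realC.
Qed.

Lemma sq1S (S : M2) : S *m S = 1%:M -> (1%:M + S) *m (1%:M + S) = 2%:R *: (1%:M + S).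
Proof.
move=> h; rewrite mulmxDl !mulmxDr !mul1mx mulmx1 h scaler_nat mulr2n.
by rewrite !addrA [RHS]addrAC.
Qed.

Lemma bl_idem a1 a2 a3 : a1 ^+ 2 + a2 ^+ 2 + a3 ^+ 2 = 1 ->
  bl 1 a1 a2 a3 *m bl 1 a1 a2 a3 = bl 1 a1 a2 a3.
Proof.
move=> h; rewrite /bl rmorph1 scale1r -scalemxAl -scalemxAr sq1S ?sgm_sq //.
rewrite !scalerA; congr (_ *: _).
by rewrite -mulrA mulVf ?mulr1 // pnatr_eq0.
Qed.

Lemma bl_gram r a1 a2 a3 : 0 <= r <= 1 -> a1 ^+ 2 + a2 ^+ 2 + a3 ^+ 2 = 1 ->
  gram (bl r a1 a2 a3).
Proof.
move=> /andP [r0 r1] h.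
pose P := bl 1 a1 a2 a3.
exists (cf r); exists (uf P).
split.
  move=> [[|[|[|k]]] Hk]; rewrite /cf /= lecR //; lra.
rewrite sum4M !cfE !ufE !adjmxM !mulmxA -!(mulmxA P).
rewrite -addrA -!scalerDr -mulmxDr -mulmxDl ev_sum mul1mx /P bl_herm bl_idem //.
rewrite /bl rmorph1 scale1r !scalerDr !scalerA addrA -scalerDl.
congr (_ *: _ + _ *: _); last by rewrite mulrC.
by rewrite inv2C; apply: ceq => /=; ring.
Qed.


Lemma tr_bl r a1 a2 a3 : \tr (bl r a1 a2 a3) = 1.
Proof.
rewrite /bl mxtraceZ mxtraceD mxtraceZ tr_sgm mulr0 addr0 mxtrace1.
by rewrite mulVf // pnatr_eq0.
Qed.

Lemma sgm_neg a1 a2 a3 : sgm (- a1) (- a2) (- a3) = - sgm a1 a2 a3.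
Proof. by rewrite !sgmU !rmorphN !scaleNr !opprD. Qed.

Lemma hblP (s : M2) (r : R) : has_bloch_len s r <->
  exists a1 a2 a3, a1 ^+ 2 + a2 ^+ 2 + a3 ^+ 2 = 1 /\ s = bl r a1 a2 a3.
Proof.
rewrite /has_bloch_len /bl; split => -[a1 [a2 [a3 [h e]]]]; exists a1, a2, a3.
  by rewrite sgmU.
by rewrite e sgmU.
Qed.

Lemma bl_mix r w a1 a2 a3 : 0 < w ->
  bl r a1 a2 a3 = (((w + r) / (2%:R * w))%:C)%C *: bl w a1 a2 a3 +
    ((1 - (w + r) / (2%:R * w))%:C)%C *: bl w (- a1) (- a2) (- a3).
Proof.
move=> hw; rewrite /bl sgm_neg scalerN.
rewrite !scalerDr !scalerN !scalerA.
set S := sgm a1 a2 a3.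
rewrite addrACA -scalerDl -scalerBl.
congr (_ *: _ + _ *: _).
  rewrite inv2C; apply: ceq => /=; ring.
rewrite inv2C; apply: ceq => /=.
  field; by rewrite gt_eqF.
ring.
Qed.

End Work.

Section W.
Variable R : realType.
Local Notation C := (R[i]).
Local Notation M2 := ('M[C]_2).

Lemma lin0 (f : M2 -> M2) : is_linear_map f -> f 0 = 0.
Proof.
move=> h; have e := h 1 0 0; rewrite !scale1r addr0 in e.
by apply: (addrI (f 0)); rewrite addr0 -e.
Qed.

Lemma linZ (f : M2 -> M2) a X : is_linear_map f -> f (a *: X) = a *: f X.
Proof. by move=> h; have := h a X 0; rewrite addr0 (lin0 h) addr0. Qed.

Lemma linD (f : M2 -> M2) X Y : is_linear_map f -> f (X + Y) = f X + f Y.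
Proof. by move=> h; have := h 1 X Y; rewrite !scale1r. Qed.

Definition prep (I : bool -> M2 -> M2) (t : M2) : bool -> M2 -> M2 :=
  fun b => if b then (fun X => \tr (I true X) *: t) else I false.

Lemma prep_instr I t : instrument I -> gram t -> \tr t = 1 -> instrument (prep I t).
Proof.
move=> [hI htp] hg ht; split.
  case => /=.
    split.
      move=> a X Y; have [hl _] := hI true.
      by rewrite hl mxtraceD mxtraceZ scalerDl scalerA.
    exact: cp_prep (hI true).2 hg.
  exact: hI false.
by move=> X /=; rewrite mxtraceD mxtraceZ ht mulr1 -mxtraceD; exact: htp.
Qed.

Lemma ReMr (x : R) (z : C) : complex.Re ((x%:C)%C * z) = x * complex.Re z.
Proof. by case: z => a b /=; ring. Qed.

Definition Gv (q : C) (I0 I1 : bool -> M2 -> M2) (J : M2) : R :=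
  complex.Re (q * (\tr (I0 true J) + \tr (I1 false J))).

Definition Kv (rho : M2) (I0 I1 : bool -> M2 -> M2) : R :=
  complex.Re (\tr (I1 true (I1 true rho))) + complex.Re (\tr (I0 false (I1 true rho))).

Lemma trZ (a : C) (A : M2) : \tr (a *: A) = a * \tr A.
Proof. exact: mxtraceZ. Qed.

Lemma calB1_prep rho I0 I1 t : instrument I0 -> instrument I1 -> \tr t = 1 ->
  calB1 rho (prep I0 t) I1 = Gv (\tr (I0 true rho)) I0 I1 t + Kv rho I0 I1.
Proof.
move=> [hI0 _] [hI1 _] ht.
set q := \tr (I0 true rho).
have e1 : \tr (\tr (I0 true (q *: t)) *: t) = q * \tr (I0 true t).
by rewrite (trZ (\tr (I0 true (q *: t))) t) ht mulr1 (linZ _ _ (hI0 true).1) (trZ q).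
have e2 : \tr (I1 false (q *: t)) = q * \tr (I1 false t).
  by rewrite (linZ _ _ (hI1 false).1) (trZ q).
rewrite /calB1 /seqprob /Gv /Kv /= -/q e1 e2.
rewrite mulrDr !ReD; lra.
Qed.

Lemma calB1_old rho I0 I1 : instrument I0 -> instrument I1 -> \tr (I0 true rho) != 0 ->
  calB1 rho I0 I1 = Gv (\tr (I0 true rho)) I0 I1 ((\tr (I0 true rho))^-1 *: I0 true rho)
     + Kv rho I0 I1.
Proof.
move=> [hI0 _] [hI1 _] hq.
set q := \tr (I0 true rho).
set s := q^-1 *: I0 true rho.
have e : I0 true rho = q *: s by rewrite /s scalerA mulfV // scale1r.
have e1 : \tr (I0 true (I0 true rho)) = q * \tr (I0 true s).
  by rewrite {1}e (linZ _ _ (hI0 true).1) (trZ q).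
have e2 : \tr (I1 false (I0 true rho)) = q * \tr (I1 false s).
  by rewrite e (linZ _ _ (hI1 false).1) (trZ q).
rewrite /calB1 /seqprob /Gv /Kv /= e1 e2.
rewrite mulrDr !ReD; lra.
Qed.

Lemma post_prep rho I t w : 0 < \tr (I true rho) -> has_bloch_len t w -> \tr t = 1 ->
  post_plus_len rho (prep I t) w.
Proof.
move=> hq hb ht; rewrite /post_plus_len /=.
rewrite (trZ (\tr (I true rho)) t) ht mulr1; split => //.
by rewrite scalerA mulVf ?scale1r // gt_eqF.
Qed.

Lemma adm_prep p w0 w1 rho I0 I1 w b1 b2 b3 : admissible p w0 w1 rho I0 I1 ->
  0 <= w <= 1 -> b1 ^+ 2 + b2 ^+ 2 + b3 ^+ 2 = 1 ->
  admissible p w w1 rho (prep I0 (bl w b1 b2 b3)) I1.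
Proof.
move=> [hr [hI0 [hI1 [[hq _] hp1]]]] hw hb.
split; first exact: hr.
split; first exact: prep_instr hI0 (bl_gram hw hb) (tr_bl _ _ _ _).
split; first exact: hI1.
split; last exact: hp1.
apply: post_prep; [exact: hq | | exact: tr_bl].
by apply/hblP; exists b1, b2, b3.
Qed.

Lemma Gv_mix q I0 I1 (l m : R) A B : instrument I0 -> instrument I1 ->
  Gv q I0 I1 ((l%:C)%C *: A + (m%:C)%C *: B) = l * Gv q I0 I1 A + m * Gv q I0 I1 B.
Proof.
move=> [hI0 _] [hI1 _].
rewrite /Gv (linD _ _ (hI0 true).1) (linD _ _ (hI1 false).1).
rewrite !(linZ _ _ (hI0 true).1) !(linZ _ _ (hI1 false).1) !mxtraceD !trZ.
have -> : q * (l%:C%C * \tr (I0 true A) + m%:C%C * \tr (I0 true B) +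
   (l%:C%C * \tr (I1 false A) + m%:C%C * \tr (I1 false B))) =
   l%:C%C * (q * (\tr (I0 true A) + \tr (I1 false A))) +
   m%:C%C * (q * (\tr (I0 true B) + \tr (I1 false B))) by ring.
by rewrite ReD !ReMr.
Qed.


Lemma step (p w0 w0' w1 : R) (rho : M2) (I0 I1 : bool -> M2 -> M2) : 0 <= w0 -> w0 <= w0' -> w0' <= 1 ->
  admissible p w0 w1 rho I0 I1 ->
  exists rho' I0' I1', admissible p w0' w1 rho' I0' I1' /\
    calB1 rho I0 I1 <= calB1 rho' I0' I1'.
Proof.
move=> h0 h01 h1 hadm.
have [e|hne] := eqVneq w0 w0'.
  by exists rho, I0, I1; split; [rewrite -e | exact: le_refl].
have hw' : 0 < w0' by apply: le_lt_trans h0 _; rewrite lt_neqAle hne h01.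
have hw'' : 0 <= w0' <= 1 by rewrite h1 ltW.
have hadm' := hadm.
case: hadm' => [hr [hI0 [hI1 [[hq hs] hp1]]]].
move/hblP: hs => [a1 [a2 [a3 [ha hs]]]].
have ha' : (- a1) ^+ 2 + (- a2) ^+ 2 + (- a3) ^+ 2 = 1 by rewrite !sqrrN.
set q := \tr (I0 true rho).
set l := (w0' + w0) / (2%:R * w0').
have hl0 : 0 <= l by apply: divr_ge0; [exact: addr_ge0 (ltW hw') h0 | apply: mulr_ge0 => //; exact: ltW].
have hl1 : 0 <= 1 - l.
  have -> : 1 - l = (w0' - w0) / (2%:R * w0') by rewrite /l; field; rewrite gt_eqF.
  by apply: divr_ge0; [rewrite subr_ge0 | apply: mulr_ge0 => //; exact: ltW].
have hold := calB1_old hI0 hI1 (lt0r_neq0 hq).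
rewrite -/q hs (bl_mix w0 a1 a2 a3 hw') -/l Gv_mix // in hold.
set Gp := Gv q I0 I1 (bl w0' a1 a2 a3) in hold.
set Gm := Gv q I0 I1 (bl w0' (- a1) (- a2) (- a3)) in hold.
set K := Kv rho I0 I1 in hold.
clearbody l.
have [hle|hlt] := lerP Gm Gp.
  exists rho, (prep I0 (bl w0' a1 a2 a3)), I1; split.
    exact: adm_prep hadm hw'' ha.
  rewrite calB1_prep ?tr_bl // -/q -/Gp -/K hold.
  clearbody Gp Gm K.
  have H : (1 - l) * (Gp - Gm) >= 0 by apply: mulr_ge0 => //; rewrite subr_ge0.
  rewrite -subr_ge0.
  have -> : Gp + K - (l * Gp + (1 - l) * Gm + K) = (1 - l) * (Gp - Gm) by ring.
  exact: H.
exists rho, (prep I0 (bl w0' (- a1) (- a2) (- a3))), I1; split.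
  exact: adm_prep hadm hw'' ha'.
rewrite calB1_prep ?tr_bl // -/q -/Gm -/K hold.
clearbody Gp Gm K.
have H : l * (Gm - Gp) >= 0 by apply: mulr_ge0 => //; rewrite subr_ge0 ltW.
rewrite -subr_ge0.
have -> : Gm + K - (l * Gp + (1 - l) * Gm + K) = l * (Gm - Gp) by ring.
exact: H.
Qed.


Lemma trle (I : bool -> M2 -> M2) X b : instrument I -> psd X -> \tr (I b X) <= \tr X.
Proof.
move=> [hI htp] hX; rewrite -(htp X) mxtraceD.
have h0 : 0 <= \tr (I (~~ b) X) by apply: psd_tr; apply: cp_pos (hI _).2 _ hX.
by case: b h0 => /= h0; rewrite ?lerDl // lerDr.
Qed.

Lemma seq_le1 (rho : M2) Ix Iy a b : psd rho -> \tr rho = 1 -> instrument Ix -> instrument Iy ->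
  seqprob rho Ix Iy a b <= 1.
Proof.
move=> hr ht hx hy; rewrite /seqprob.
have hX : psd (Ix a rho) by apply: cp_pos (hx.1 a).2 _ hr.
have := le_trans (trle b hy hX) (trle a hx hr); rewrite ht lecE => /andP [_].
by [].
Qed.

Lemma calB1_le4 p w0 w1 (rho : M2) I0 I1 : admissible p w0 w1 rho I0 I1 ->
  0 <= p <= 1 -> calB1 rho I0 I1 <= 4%:R.
Proof.
move=> [hr [hI0 [hI1 _]]] hp.
move/hblP: hr => [a1 [a2 [a3 [ha ->]]]].
have hps := gram_psd (bl_gram hp ha).
have ht := tr_bl p a1 a2 a3.
rewrite /calB1.
have := seq_le1 true true hps ht hI0 hI0.
have := seq_le1 true true hps ht hI1 hI1.
have := seq_le1 true false hps ht hI0 hI1.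
have := seq_le1 true false hps ht hI1 hI0.
lra.
Qed.

Definition Sset (p w0 w1 : R) : set R := [set v | exists (rho : M2) (I0 I1 : bool -> M2 -> M2),
                 admissible p w0 w1 rho I0 I1 /\ v = calB1 rho I0 I1].

Lemma B1E (p w0 w1 : R) : B1 p w0 w1 = sup (Sset p w0 w1).
Proof. by []. Qed.

Lemma sup_mono (A B : set R) : (forall a, A a -> exists2 b, B b & a <= b) ->
  ((B !=set0)%classic -> (A !=set0)%classic) -> (forall b, B b -> b <= 4%:R) -> sup A <= sup B.
Proof.
move=> hAB hBA hB.
have [hA|hA] := boolp.pselect (A !=set0)%classic.
  apply: sup_le => //.
    by move=> a /hAB [b hb hab]; apply/downP; exists b.
  split; first by case: hA => a /hAB [b hb _]; exists b.
  by exists 4%:R; apply/ubP => b /hB.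
have eA : A = set0.
  by apply/seteqP; split => x // hx; exfalso; apply: hA; exists x.
have eB : B = set0.
  by apply/seteqP; split => x // hx; exfalso; apply: hA; apply: hBA; exists x.
by rewrite eA eB sup0.
Qed.


Lemma adm_swap p w0 w1 (rho : M2) I0 I1 : admissible p w0 w1 rho I0 I1 -> admissible p w1 w0 rho I1 I0.
Proof. by move=> [h1 [h2 [h3 [h4 h5]]]]. Qed.

Lemma calB1_swap (rho : M2) I0 I1 : calB1 rho I1 I0 = calB1 rho I0 I1.
Proof. rewrite /calB1; lra. Qed.

Lemma B1_sym (p w0 w1 : R) : B1 p w0 w1 = B1 p w1 w0.
Proof.
rewrite !B1E; congr sup; apply/seteqP; split => v [rho [I0 [I1 [h ->]]]];
  exists rho, I1, I0; split; [exact: adm_swap | by rewrite calB1_swap |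
                              exact: adm_swap | by rewrite calB1_swap].
Qed.

Lemma B1_mono (p w0 w0' w1 : R) : 0 <= p <= 1 -> 0 <= w0 <= 1 -> 0 <= w0' <= 1 ->
  w0 <= w0' -> B1 p w0 w1 <= B1 p w0' w1.
Proof.
move=> hp /andP [h0 _] /andP [_ h1] h01; rewrite !B1E; apply: sup_mono.
- move=> a [rho [I0 [I1 [h ->]]]].
  have [rho' [I0' [I1' [h' hle]]]] := step h0 h01 h1 h.
  by exists (calB1 rho' I0' I1'); first by exists rho', I0', I1'.
- move=> [b [rho [I0 [I1 [h _]]]]].
  have h01' : 0 <= w0 <= 1 by rewrite h0 (le_trans h01 h1).
  have hu : (0 : R) ^+ 2 + 0 ^+ 2 + 1 ^+ 2 = 1 by rewrite !expr2 !mul0r !add0r mul1r.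
  exists (calB1 rho (prep I0 (bl w0 0 0 1)) I1).
  exists rho, (prep I0 (bl w0 0 0 1)), I1; split; [exact: adm_prep h h01' hu | by []].
- by move=> b [rho [I0 [I1 [h ->]]]]; exact: calB1_le4 h hp.
Qed.

End W.

Unset Implicit Arguments.
Set Strict Implicit.

Theorem mainTheorem4 (R : realType) (p : R) (hp : 0 <= p <= 1) :
  (forall w0 w0' w1 : R, 0 <= w0 <= 1 -> 0 <= w0' <= 1 -> 0 <= w1 <= 1 ->
     w0 <= w0' -> B1 p w0 w1 <= B1 p w0' w1) /\
  (forall w0 w1 w1' : R, 0 <= w0 <= 1 -> 0 <= w1 <= 1 -> 0 <= w1' <= 1 ->
     w1 <= w1' -> B1 p w0 w1 <= B1 p w0 w1') /\
  (forall w0 w1 : R, 0 <= w0 <= 1 -> 0 <= w1 <= 1 ->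
     B1 p w0 w1 <= B1 p (Num.max w0 w1) (Num.max w0 w1)).
Proof.
have P1 : forall w0 w0' w1 : R, 0 <= w0 <= 1 -> 0 <= w0' <= 1 -> 0 <= w1 <= 1 ->
     w0 <= w0' -> B1 p w0 w1 <= B1 p w0' w1.
  by move=> w0 w0' w1 h0 h0' _ hle; exact: B1_mono.
have P2 : forall w0 w1 w1' : R, 0 <= w0 <= 1 -> 0 <= w1 <= 1 -> 0 <= w1' <= 1 ->
     w1 <= w1' -> B1 p w0 w1 <= B1 p w0 w1'.
  by move=> w0 w1 w1' h0 h1 h1' hle; rewrite B1_sym [X in _ <= X]B1_sym; exact: B1_mono.
split; first exact: P1.
split; first exact: P2.
move=> w0 w1 h0 h1.
have hm : 0 <= Num.max w0 w1 <= 1.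
  case/andP: h0 => a b; case/andP: h1 => c d.
  by rewrite ge_max b d andbT le_max a.
apply: le_trans (P1 w0 (Num.max w0 w1) w1 h0 hm h1 _) _; first by rewrite le_max lexx.
apply: P2 => //; by rewrite le_max lexx orbT.
Qed.
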